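(* In the single-period model described in the context, with short sales prohibitions (admissible strategies satisfy $h_0\in\mathbb{R}$, $h_m\ge 0$ for $m=1,\dots,M$), if there is no arbitrage under model uncertainty, then there exists a weak risk neutral nonlinear expectation, i.e. a nonempty family $\mathcal{Q}$ of probability measures on $\Omega$ such that $\sup_{Q\in\mathcal{Q}}Q(\omega)>0$ for all $\omega\in\Omega$ and $\inf_{Q\in\mathcal{Q}}E_Q[\Delta S_m^*]\le 0$ for all $m=1,\dots,M$.
   Context: Single-period model: $\Omega=\{\omega_1,\dots,\omega_K\}$ is a finite sample space with all subsets measurable. $\mathcal{P}$ is a nonempty family of probability measures on $\Omega$ with $\sup_{P\in\mathcal{P}}P(\omega)>0$ for every $\omega\in\Omega$. There is a bond with $S_0(0)=1$, $S_0(1)=1+r$, $r\ge 0$ a constant, and $M$ risky securities with known initial prices $S_m(0)>0$ and random terminal prices $S_m(1):\Omega\to\mathbb{R}$, $m=1,\dots,M$. Discounted prices: $S_m^*(t)=S_m(t)/S_0(t)$, $t=0,1$, and $\Delta S_m^*=S_m^*(1)-S_m^*(0)$. For a trading strategy $h=(h_0,\dots,h_M)$, the discounted portfolio value is $V_t^*=h_0+\sum_{m=1}^M h_m S_m^*(t)$, $t=0,1$. A trading strategy is an arbitrage under model uncertainty if (i) $V_0^*=0$ and (ii) $V_1^*(\omega)\ge 0$ for all $\omega\in\Omega$ and $\sup_{P\in\mathcal{P}}E_P[V_1^*]>0$. ''No arbitrage under model uncertainty'' means no admissible trading strategy is an arbitrage under model uncertainty. *)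

(* Defs.v *)
From mathcomp Require Import all_boot all_order all_algebra.
From mathcomp Require Import boolp classical_sets reals.
Set Implicit Arguments. Unset Strict Implicit. Unset Printing Implicit Defensive.
Import Order.TTheory GRing.Theory Num.Theory.
Local Open Scope ring_scope.
Local Open Scope classical_set_scope.

Section Defs.
Variables (R : realType) (Omega : finType).

(* A probability measure on the finite sample space Omega (all subsets
   measurable) is determined by its point masses P(omega). *)
Definition is_prob (P : Omega -> R) : Prop :=
  (forall w, 0 <= P w) /\ \sum_(w : Omega) P w = 1.

Definition expect (P : Omega -> R) (X : Omega -> R) : R :=
  \sum_(w : Omega) P w * X w.

Definition charges_all (Pf : set (Omega -> R)) : Prop :=
  forall w : Omega, 0 < sup [set P w | P in Pf].

Variables (M : nat) (r : R) (S0 : 'I_M -> R) (S1 : 'I_M -> Omega -> R).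

(* discounted prices: S*_m(0) = S_m(0)/S_0(0) = S_m(0), S*_m(1) = S_m(1)/(1+r) *)
Definition disc0 (m : 'I_M) : R := S0 m / 1.
Definition disc1 (m : 'I_M) (w : Omega) : R := S1 m w / (1 + r).
Definition dS (m : 'I_M) (w : Omega) : R := disc1 m w - disc0 m.

Definition V0 (h0 : R) (h : 'I_M -> R) : R := h0 + \sum_(m < M) h m * disc0 m.
Definition V1 (h0 : R) (h : 'I_M -> R) (w : Omega) : R :=
  h0 + \sum_(m < M) h m * disc1 m w.

Definition admissible_ss (h : 'I_M -> R) : Prop := forall m, 0 <= h m.

Definition arbitrage_mu (Pf : set (Omega -> R)) (h0 : R) (h : 'I_M -> R) : Prop :=
  V0 h0 h = 0 /\ (forall w, 0 <= V1 h0 h w) /\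
  0 < sup [set expect P (V1 h0 h) | P in Pf].

Definition NA_mu_ss (Pf : set (Omega -> R)) : Prop :=
  forall h0 h, admissible_ss h -> ~ arbitrage_mu Pf h0 h.

Definition weak_risk_neutral (Q : set (Omega -> R)) : Prop :=
  Q `<=` is_prob /\ Q !=set0 /\ charges_all Q /\
  forall m : 'I_M, inf [set expect Q' (dS m) | Q' in Q] <= 0.
End Defs.

(* Main.v *)
Require Import Defs.
From mathcomp Require Import all_boot all_order all_algebra.
From mathcomp Require Import boolp classical_sets reals.
Import Order.TTheory GRing.Theory Num.Theory.
Local Open Scope ring_scope.
Local Open Scope classical_set_scope.

Lemma le_sum_term (R : realType) (T : finType) (F : T -> R) i :
  (forall j, 0 <= F j) -> F i <= \sum_j F j.
Proof.
move=> H; rewrite (bigD1 i) //= lerDl; apply: sumr_ge0 => j _; exact: H.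
Qed.

Definition dirac (R : realType) (T : finType) (a : T) : T -> R :=
  fun w => if w == a then 1 else 0.
Arguments dirac R {T}.

Lemma sum_dirac (R : realType) {T : finType} (a : T) (X : T -> R) :
  \sum_w dirac R a w * X w = X a.
Proof.
rewrite (bigD1 a) //= /dirac eqxx mul1r big1 ?addr0 // => w /negbTE ->.
by rewrite mul0r.
Qed.

Theorem mainTheorem3 (R : realType) (Omega : finType)
  (Pf : set (Omega -> R))
  (HPprob : Pf `<=` is_prob (R:=R) (Omega:=Omega))
  (HPne : Pf !=set0)
  (HPchg : charges_all Pf)
  (M : nat) (r : R) (Hr : 0 <= r)
  (S0 : 'I_M -> R) (HS0 : forall m, 0 < S0 m)
  (S1 : 'I_M -> Omega -> R) :
  NA_mu_ss r S0 S1 Pf ->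
  exists Q : set (Omega -> R), weak_risk_neutral r S0 S1 Q.
Proof.
move=> NA.
have [P0 P0in] := HPne.
have [P0ge P0sum] := HPprob _ P0in.
have [a0 _] : exists a : Omega, True.
  case: (pickP (@predT Omega)) => [a _|H]; first by exists a.
  exfalso; move: P0sum; rewrite big1 => [/eqP|i _]; first by rewrite eq_sym oner_eq0.
  by have := H i.
have Hneg : forall m, exists w, dS r S0 S1 m w <= 0.
  move=> m; apply: contrapT => Hn.
  have Hpos : forall w, 0 < dS r S0 S1 m w.
    move=> w; rewrite ltNge; apply/negP => Hw; apply: Hn; by exists w.
  pose h := fun i : 'I_M => (i == m)%:R : R.
  apply: (NA (- disc0 S0 m) h).
    by move=> i; rewrite /h ler0n.
  have eV : V1 r S1 (- disc0 S0 m) h = dS r S0 S1 m.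
    apply/funext => w; rewrite /V1 /dS (bigD1 m) //= /h eqxx mul1r big1 ?addr0.
      by rewrite addrC.
    by move=> i /negbTE ->; rewrite mul0r.
  split.
    rewrite /V0 (bigD1 m) //= /h eqxx mul1r big1 ?addr0 ?addNr //.
    by move=> i /negbTE ->; rewrite mul0r.
  rewrite eV; split; first by move=> w; apply: ltW.
  have [w1 Pw1] : exists w, 0 < P0 w.
    apply: contrapT => Hn'; move: P0sum; rewrite big1 => [/eqP|i _].
      by rewrite eq_sym oner_eq0.
    apply/eqP; rewrite eq_le P0ge andbT leNgt; apply/negP => Hi; apply: Hn'.
    by exists i.
  have lt1 : 0 < expect P0 (dS r S0 S1 m).
    rewrite /expect; apply: (lt_le_trans _ (@le_sum_term _ _ (fun w => P0 w * dS r S0 S1 m w) w1 _)).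
      by apply: mulr_gt0.
    by move=> j; apply: mulr_ge0 => //; apply: ltW.
  apply: (lt_le_trans lt1); apply: ub_le_sup; last by exists P0.
  exists (\sum_w `|dS r S0 S1 m w|) => _ [P PP <-].
  have [Pge Psum] := HPprob _ PP.
  apply: ler_sum => w _.
  apply: (le_trans (ler_norm _)); rewrite normrM ger0_norm //.
  rewrite -[X in _ <= X]mul1r ler_wpM2r //.
  by rewrite -Psum; apply: le_sum_term.
exists [set dirac R a | a in setT]; split; [|split; [|split]].
- move=> _ [a _ <-]; split.
    by move=> w; rewrite /dirac; case: (w == a).
  by have := sum_dirac R a (fun _ => 1 : R); under eq_bigr do rewrite mulr1.
- by exists (dirac R a0), a0.
- move=> w; apply: (@lt_le_trans _ _ 1) => //.
  apply: ub_le_sup.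
  + exists 1 => _ [_ [a _ <-] <-]; rewrite /dirac; by case: (w == a).
  + exists (dirac R w); first by exists w.
    by rewrite /dirac eqxx.
- move=> m; have [w Hw] := Hneg m.
  apply: (le_trans _ Hw).
  have e : expect (dirac R w) (dS r S0 S1 m) = dS r S0 S1 m w by exact: sum_dirac.
  rewrite -e; apply: ge_inf; last by exists (dirac R w) => //; exists w.
  exists (- \sum_v `|dS r S0 S1 m v|) => _ [_ [a _ <-] <-].
  rewrite /expect sum_dirac lerNl; apply: (le_trans (y := `|dS r S0 S1 m a|)); first by rewrite -normrN ler_norm.
  by apply: le_sum_term.
Qed.
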